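(* Let $\mathcal{G}=(I,E)$ be a simple, undirected, connected graph with finite node set $I$, let $\mathfrak{f}\notin I$ and $I_\mathfrak{f}:=I\cup\{\mathfrak{f}\}$. Let $Q\in\mathbb{R}_+^{I\times I}$ and $\mathbf{q}\in\mathbb{R}_+^{I}$ satisfy: $Q_{ij}=0$ iff $\{i,j\}\notin E$, and $\sum_{j\in I}Q_{ij}+q_i=1$ for every $i\in I$. Assume (i) $\mathbf{q}$ is not identically zero and, for every $\ell\in I$, $Q_{I\setminus\{\ell\},I\setminus\{\ell\}}$ is strictly sub-stochastic; and (ii) there is a symmetric $C\in\mathbb{R}_+^{I_\mathfrak{f}\times I_\mathfrak{f}}$ with $Q_{ij}=C_{ij}/\sum_{k\in I_\mathfrak{f}}C_{ik}$ and $q_i=C_{i\mathfrak{f}}/\sum_{k\in I_\mathfrak{f}}C_{ik}$ for all $i,j\in I$. Consider the following Message Passing Algorithm (MPA). For each ordered pair $(i,j)$ with $\{i,j\}\in E$, node $i$ sends to $j$ messages $W^{i\to j}(t)$ and $H^{i\to j}(t)$, $t=0,1,2,\dots$, with $W^{i\to j}(0)=H^{i\to j}(0)=1$ and, synchronously for all such pairs, $$W^{i\to j}(t+1)=\frac{1}{1+\frac{q_i}{Q_{ij}}+\sum_{k\in N_i\setminus\{j\}}\frac{Q_{ik}}{Q_{ij}}\big(1-W^{k\to i}(t)\big)},\qquad H^{i\to j}(t+1)=1+\sum_{k\in N_i\setminus\{j\}}W^{k\to i}(t)\,H^{k\to i}(t),$$ where $N_i=\{w\in I:\{i,w\}\in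 E\}$. Each node $\ell\in I$ computes $H^\ell(t)=1+\sum_{i\in N_\ell}W^{i\to\ell}(t)\,H^{i\to\ell}(t)$. Then the MPA converges: for every ordered pair $(i,j)$ with $\{i,j\}\in E$ the sequences $W^{i\to j}(t)$ and $H^{i\to j}(t)$ converge as $t\to\infty$, and consequently $H^\ell(t)$ converges for every $\ell\in I$.
   Context: A nonnegative matrix is strictly sub-stochastic if all its row sums are $\le 1$ and at least one is $<1$; $Q_{T,T}$ denotes the principal submatrix indexed by $T$. *)

(* Defs.v *)
From HB Require Import structures.
From mathcomp Require Import all_boot all_order all_algebra.
From mathcomp Require Import all_classical all_reals all_analysis.
Set Implicit Arguments. Unset Strict Implicit. Unset Printing Implicit Defensive.
Import Order.TTheory GRing.Theory Num.Theory.
Local Open Scope ring_scope.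

Section Defs.
Variables (R : realType) (I : finType).

Definition simple_graph (e : rel I) : Prop :=
  irreflexive e /\ symmetric e.

Definition connected_graph (e : rel I) : Prop :=
  forall x y : I, connect e x y.

(* Q_{T,T} (principal submatrix on T) is strictly sub-stochastic
   (Q is assumed entrywise nonnegative separately) *)
Definition strictly_substochastic_on (Q : I -> I -> R) (T : {set I}) : Prop :=
  (forall i, i \in T -> \sum_(j in T) Q i j <= 1) /\
  (exists2 i, i \in T & \sum_(j in T) Q i j < 1).

(* One synchronous step of the message passing algorithm.
   W k i, H k i stand for W^{k->i}, H^{k->i}; values on non-edges are irrelevant. *)
Definition mpa_step (e : rel I) (Q : I -> I -> R) (q : I -> R)
  (WH : (I -> I -> R) * (I -> I -> R)) : (I -> I -> R) * (I -> I -> R) :=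
  let W := WH.1 in let H := WH.2 in
  (fun i j => (1 + q i / Q i j
                 + \sum_(k | e i k && (k != j)) Q i k / Q i j * (1 - W k i))^-1,
   fun i j => 1 + \sum_(k | e i k && (k != j)) W k i * H k i).

Fixpoint mpa (e : rel I) (Q : I -> I -> R) (q : I -> R) (t : nat)
  : (I -> I -> R) * (I -> I -> R) :=
  match t with
  | 0 => (fun _ _ => 1, fun _ _ => 1)
  | t'.+1 => mpa_step e Q q (mpa e Q q t')
  end.

Definition mpaW e Q q t i j : R := (mpa e Q q t).1 i j.
Definition mpaH e Q q t i j : R := (mpa e Q q t).2 i j.
Definition mpaHnode e Q q t (l : I) : R :=
  1 + \sum_(i | e l i) mpaW e Q q t i l * mpaH e Q q t i l.

End Defs.

(* Main.v *)
Require Import Defs.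
From HB Require Import structures.
From mathcomp Require Import all_boot all_order all_algebra.
From mathcomp Require Import all_classical all_reals all_analysis.
From mathcomp Require Import ring lra.
Import Order.TTheory GRing.Theory Num.Theory.
Import numFieldNormedType.Exports.
Local Open Scope ring_scope.
Local Open Scope classical_set_scope.
Set Implicit Arguments. Unset Strict Implicit. Unset Printing Implicit Defensive.

Section Main.
Variables (R : realType) (I : finType) (e : rel I) (Q : I -> I -> R) (q : I -> R).
Hypothesis esym : symmetric e.
Hypothesis eirr : irreflexive e.
Hypothesis conn : forall x y : I, connect e x y.
Hypothesis Q0 : forall i j, 0 <= Q i j.
Hypothesis q0 : forall i, 0 <= q i.
Hypothesis Qe : forall i j, Q i j = 0 <-> ~~ e i j.
Hypothesis rows : forall i, \sum_(j : I) Q i j + q i = 1.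
Variable m0 : I.
Hypothesis qm0 : q m0 != 0.

Lemma Qpos i j : e i j -> 0 < Q i j.
Proof.
move=> eij; rewrite lt_def Q0 andbT; apply/eqP => /Qe; by rewrite eij.
Qed.

Lemma Qne i j : ~~ e i j -> Q i j = 0.
Proof. by move/Qe. Qed.

Lemma sumQ_split (f : I -> R) i j : e i j ->
  \sum_k Q i k * f k = Q i j * f j + \sum_(k | e i k && (k != j)) Q i k * f k.
Proof.
move=> eij.
rewrite (bigID (fun k => e i k)) /= [X in _ + X]big1 ?addr0; last first.
  by move=> k /Qne ->; rewrite mul0r.
by rewrite (bigD1 j).
Qed.

Lemma sumQ_but i j : e i j ->
  \sum_(k | e i k && (k != j)) Q i k = 1 - q i - Q i j.
Proof.
move=> eij; have := @sumQ_split (fun _ => 1) i j eij.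
under eq_bigr do rewrite mulr1.
under [X in _ = _ + X -> _]eq_bigr do rewrite mulr1.
rewrite mulr1 => H; rewrite -(rows i) H; lra.
Qed.


Definition S (W : I -> I -> R) i j := \sum_(k | e i k && (k != j)) Q i k * W k i.
Definition D (W : I -> I -> R) i j := 1 - S W i j.
Definition Phi (W : I -> I -> R) i j := Q i j / D W i j.

Lemma W_step t i j : e i j -> mpaW e Q q t.+1 i j = Phi (mpaW e Q q t) i j.
Proof.
move=> eij; rewrite /mpaW /Phi /D /S /=.
set W := (mpa e Q q t).1.
have Qn0 : Q i j != 0 by rewrite gt_eqF ?Qpos.
have -> : \sum_(k | e i k && (k != j)) Q i k / Q i j * (1 - W k i)
   = (\sum_(k | e i k && (k != j)) Q i k - \sum_(k | e i k && (k != j)) Q i k * W k i) / Q i j.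
  rewrite -sumrB mulr_suml; apply: eq_bigr => k _; rewrite mulrBr mulr1.
  by rewrite mulrAC mulrBl.
rewrite sumQ_but //.
set s := \sum_(k | _) _.
have -> : 1 + q i / Q i j + (1 - q i - Q i j - s) / Q i j = (1 - s) / Q i j.
  by field.
by rewrite invf_div.
Qed.

Lemma H_step t i j : mpaH e Q q t.+1 i j =
  1 + \sum_(k | e i k && (k != j)) mpaW e Q q t k i * mpaH e Q q t k i.
Proof. by []. Qed.


Definition ok (W : I -> I -> R) := forall k i, e k i -> 0 <= W k i <= 1.

Lemma S_ge0 W i j : ok W -> 0 <= S W i j.
Proof.
move=> oW; apply: sumr_ge0 => k /andP[eik _].
have eki : e k i by rewrite esym.
by have /andP[? _] := oW k i eki; rewrite mulr_ge0.
Qed.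

Lemma S_le W i j : ok W -> e i j -> S W i j <= 1 - q i - Q i j.
Proof.
move=> oW eij; rewrite -sumQ_but //; apply: ler_sum => k /andP[eik _].
have eki : e k i by rewrite esym.
have /andP[_ ?] := oW k i eki.
by rewrite -[X in _ <= X]mulr1 ler_wpM2l.
Qed.

Lemma D_ge W i j : ok W -> e i j -> Q i j + q i <= D W i j.
Proof. move=> oW eij; have := S_le oW eij; rewrite /D; lra. Qed.

Lemma D_le1 W i j : ok W -> D W i j <= 1.
Proof. move=> oW; have := S_ge0 i j oW; rewrite /D; lra. Qed.

Lemma D_gt0 W i j : ok W -> e i j -> 0 < D W i j.
Proof.
move=> oW eij; have := D_ge oW eij; have := Qpos eij; have := q0 i; lra.
Qed.

Lemma Phi_gt0 W i j : ok W -> e i j -> 0 < Phi W i j.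
Proof. by move=> oW eij; rewrite /Phi divr_gt0 ?Qpos ?D_gt0. Qed.

Lemma Phi_le1 W i j : ok W -> e i j -> Phi W i j <= 1.
Proof.
move=> oW eij; rewrite /Phi ler_pdivrMr ?D_gt0 // mul1r.
have := D_ge oW eij; have := q0 i; lra.
Qed.

Lemma Phi_ok W : ok W -> ok (Phi W).
Proof. by move=> oW k i eki; rewrite ltW ?Phi_gt0 ?Phi_le1. Qed.

Lemma S_mono W W' i j : ok W -> (forall k i, e k i -> W k i <= W' k i) ->
  S W i j <= S W' i j.
Proof.
move=> oW le; apply: ler_sum => k /andP[eik _].
by rewrite ler_wpM2l // le // esym.
Qed.

Lemma Phi_mono W W' i j : ok W -> ok W' -> (forall k i, e k i -> W k i <= W' k i) ->
  e i j -> Phi W i j <= Phi W' i j.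
Proof.
move=> oW oW' le eij; rewrite /Phi ler_wpM2l // lef_pV2 ?posrE ?D_gt0 //.
by rewrite /D lerB // S_mono.
Qed.

Notation W t := (mpaW e Q q t).

Lemma W_ok t : ok (W t).
Proof.
elim: t => [|t IH] k i eki; first by rewrite /mpaW /= ler01 lexx.
by rewrite W_step //; apply: Phi_ok.
Qed.

Lemma W_decr t k i : e k i -> W t.+1 k i <= W t k i.
Proof.
elim: t k i => [|t IH] k i eki.
  by have /andP[_ ?] := W_ok 1 eki.
by rewrite !W_step //; apply: Phi_mono => //; apply: W_ok.
Qed.

Lemma W_gt0 t k i : e k i -> 0 < W t k i.
Proof.
case: t => [|t] eki; first by rewrite /mpaW /= ltr01.
by rewrite W_step //; apply: Phi_gt0 => //; apply: W_ok.
Qed.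

Fixpoint V t : I -> I -> R := if t is t'.+1 then Phi (V t') else fun _ _ => 0.

Lemma V_ok t : ok (V t).
Proof.
elim: t => [|t IH] k i eki; first by rewrite /= lexx ler01.
by apply: Phi_ok.
Qed.

Lemma V_le_W t k i : e k i -> V t k i <= W t k i.
Proof.
elim: t k i => [|t IH] k i eki.
  by rewrite /= ltW // W_gt0.
by rewrite W_step //=; apply: Phi_mono => //; [apply: V_ok | apply: W_ok].
Qed.


Lemma exists_max (f : I -> R) : exists i, forall j, f j <= f i.
Proof.
case: (@arg_maxP _ _ I m0 predT f isT) => i _ H; exists i => j; exact: H.
Qed.

Lemma kernel_le0 (v : I -> R) : (forall i, v i = \sum_k Q i k * v k) -> forall i, v i <= 0.
Proof.
move=> Hv.
have [i0 Hi0] := exists_max v.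
suff : v i0 <= 0 by move=> H i; apply: le_trans (Hi0 i) H.
rewrite leNgt; apply/negP => Mpos; set M := v i0 in Mpos Hi0.
have key : forall i, v i = M -> q i = 0 /\ forall k, e i k -> v k = M.
  move=> i viM.
  have E : \sum_k Q i k * (M - v k) = - (M * q i).
    under eq_bigr do rewrite mulrBr.
    rewrite sumrB -Hv viM -mulr_suml.
    have -> : \sum_k Q i k = 1 - q i by rewrite -(rows i); lra.
    ring.
  have ge : 0 <= \sum_k Q i k * (M - v k).
    by apply: sumr_ge0 => k _; rewrite mulr_ge0 // subr_ge0.
  have qi0 : q i = 0.
    apply/eqP; rewrite eq_le q0 andbT.
    rewrite E oppr_ge0 pmulr_rle0 // in ge.
  split => // k eik.
  move: E; rewrite qi0 mulr0 oppr0 => /eqP; rewrite psumr_eq0; last first.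
    by move=> a _; rewrite mulr_ge0 // subr_ge0.
  move=> /allP /(_ k (mem_index_enum k)) /=; rewrite mulf_eq0 subr_eq0.
  by rewrite (gt_eqF (Qpos eik)) /= => /eqP ->.
pose A := [pred x | v x == M].
have clA : closed_mem e (mem A).
  move=> x y exy; rewrite !inE; apply/eqP/eqP => [/key [_ ->] //|/key [_ H]].
  by apply: H; rewrite esym.
have : m0 \in A by rewrite -(closed_connect clA (conn i0 m0)) inE.
rewrite inE => /eqP /key [qm _]; move: qm0; by rewrite qm eqxx.
Qed.


Definition Amx : 'M[R]_#|I| :=
  \matrix_(a, c) ((a == c)%:R - Q (enum_val c) (enum_val a)).

Lemma sum_ord (F : 'I_#|I| -> R) : \sum_a F a = \sum_k F (enum_rank k).
Proof.
rewrite (reindex (@enum_rank I)) //; apply: onW_bij; exact: enum_rank_bij.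
Qed.

Lemma Amx_row (v : 'rV[R]_#|I|) i :
  (v *m Amx) 0 (enum_rank i) = v 0 (enum_rank i) - \sum_k Q i k * v 0 (enum_rank k).
Proof.
rewrite !mxE.
under eq_bigr do rewrite mxE mulrBr.
rewrite sumrB (bigD1 (enum_rank i)) //= eqxx mulr1 big1 ?addr0; last first.
  by move=> a /negbTE ->; rewrite mulr0.
congr (_ - _); rewrite sum_ord; apply: eq_bigr => k _.
by rewrite !enum_rankK mulrC.
Qed.

Lemma solve (b : I -> R) : exists x : I -> R, forall i, x i = b i + \sum_k Q i k * x k.
Proof.
have uA : Amx \in unitmx.
  rewrite unitmxE unitfE; apply/negP => /det0P [v vn0 vA].
  pose w i := v 0 (enum_rank i).
  have Hw : forall i, w i = \sum_k Q i k * w k.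
    move=> i; have := congr1 (fun M : 'rV[R]_#|I| => M 0 (enum_rank i)) vA.
    by rewrite Amx_row mxE => /eqP; rewrite subr_eq0 => /eqP.
  have Hw' : forall i, - w i = \sum_k Q i k * - w k.
    move=> i; rewrite Hw -sumrN; apply: eq_bigr => k _; ring.
  move/negP: vn0; apply; apply/eqP/matrixP => a c; rewrite mxE.
  rewrite (ord1 a); have := kernel_le0 Hw (enum_val c); have := kernel_le0 Hw' (enum_val c).
  rewrite /w enum_valK; lra.
pose r : 'rV[R]_#|I| := \row_a b (enum_val a).
pose x := r *m invmx Amx.
exists (fun i => x 0 (enum_rank i)) => i.
have := congr1 (fun M : 'rV[R]_#|I| => M 0 (enum_rank i)) (mulmxKV uA r).
have Hr : r 0 (enum_rank i) = b i by rewrite /r mxE enum_rankK.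
rewrite Amx_row Hr => H; rewrite -H /x; ring.
Qed.


Lemma h_ge1 (h : I -> R) : (forall i, h i = 1 + \sum_k Q i k * h k) -> forall i, 1 <= h i.
Proof.
move=> hQ.
have [i0 Hi0] := exists_max (fun i => - h i).
have Hm : forall j, h i0 <= h j by move=> j; have := Hi0 j; lra.
have : \sum_k Q i0 k * h k >= h i0 * (1 - q i0).
  rewrite -(rows i0) addrK mulr_sumr; apply: ler_sum => k _.
  by rewrite mulrC ler_wpM2l.
move=> H1; have E := hQ i0.
have m0pos : 0 < h i0.
  rewrite ltNge; apply/negP => hn.
  have : h i0 * q i0 <= 0 by rewrite mulr_le0_ge0.
  move: H1 E; set s := \sum_k _; have := q0 i0; nra.
move=> i; rewrite hQ lerDl; apply: sumr_ge0 => k _.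
by rewrite mulr_ge0 // (le_trans (ltW m0pos)).
Qed.

Lemma Xid (g : I -> R) W i j : e i j -> D W i j != 0 ->
  (g i - Phi W i j * g j) * D W i j =
  (g i - \sum_k Q i k * g k) + \sum_(k | e i k && (k != j)) Q i k * (g k - W k i * g i).
Proof.
move=> eij Dn0; rewrite /Phi (sumQ_split g eij).
under [X in _ = _ + X]eq_bigr do rewrite mulrBr.
rewrite sumrB.
have -> : \sum_(k | e i k && (k != j)) Q i k * (W k i * g i) = S W i j * g i.
  by rewrite /S mulr_suml; apply: eq_bigr => k _; rewrite mulrA.
move: Dn0; rewrite /D => Dn0.
set s := \sum_(k | _) Q i k * g k.
field; exact: Dn0.
Qed.


Variable h : I -> R.
Hypothesis hQ : forall i, h i = 1 + \sum_k Q i k * h k.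

Definition hM := 1 + \sum_i h i.
Definition lam := 1 - hM^-1.

Lemma hQ' i : h i - \sum_k Q i k * h k = 1.
Proof. have := hQ i; set s := \sum_k _; lra. Qed.

Lemma h1 i : 1 <= h i. Proof. exact: h_ge1 hQ i. Qed.

Lemma h_le_hM i : h i <= hM.
Proof.
rewrite /hM (bigD1 i) //=.
have : 0 <= \sum_(j | j != i) h j by apply: sumr_ge0 => j _; exact: le_trans (h1 j).
lra.
Qed.

Lemma hM_ge1 : 1 <= hM.
Proof. exact: le_trans (h1 m0) (h_le_hM m0). Qed.

Lemma lam_ge0 : 0 <= lam.
Proof.
rewrite /lam subr_ge0 invf_le1 ?hM_ge1 //; have := hM_ge1; lra.
Qed.

Lemma lam_lt1 : lam < 1.
Proof. rewrite /lam; have : 0 < hM^-1 by rewrite invr_gt0; have := hM_ge1; lra. lra. Qed.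

Lemma lam_bound x : 0 <= x -> x <= hM -> x - 1 <= lam * x.
Proof.
move=> x0 xM; rewrite /lam mulrBl mul1r.
have : hM^-1 * x <= 1.
  by rewrite ler_pdivrMl ?mulr1 //; have := hM_ge1; lra.
lra.
Qed.

Lemma X_le W k i : ok W -> e k i -> h k - W k i * h i <= h k.
Proof.
move=> oW eki; have /andP[w0 _] := oW k i eki.
have := h1 i; have : 0 <= W k i * h i by rewrite mulr_ge0 // (le_trans _ (h1 i)).
lra.
Qed.

Lemma XV t k i : e k i -> 1 <= h k - V t k i * h i.
Proof.
elim: t k i => [|t IH] i j eij; first by rewrite /= mul0r subr0 h1.
have Dp := D_gt0 (V_ok t) eij.
rewrite /= -(ler_pM2r Dp) mul1r Xid ?gt_eqF // hQ'.
have : 0 <= \sum_(k | e i k && (k != j)) Q i k * (h k - V t k i * h i).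
  apply: sumr_ge0 => k /andP[eik _]; rewrite mulr_ge0 //.
  by apply: (le_trans ler01); apply: IH; rewrite esym.
have := D_le1 i j (V_ok t); lra.
Qed.


Lemma Phi_diff W W' i j : D W i j != 0 -> D W' i j != 0 ->
  Phi W i j - Phi W' i j = Phi W i j * (S W i j - S W' i j) / D W' i j.
Proof. rewrite /Phi /D => d1 d2; field; by rewrite d1 d2. Qed.

Lemma SdiffE W W' i j :
  S W i j - S W' i j = \sum_(k | e i k && (k != j)) Q i k * (W k i - W' k i).
Proof. by rewrite /S -sumrB; apply: eq_bigr => k _; rewrite mulrBr. Qed.

Lemma Xrec W i j : e i j -> ok W ->
  \sum_(k | e i k && (k != j)) Q i k * (h k - W k i * h i)
  = (h i - Phi W i j * h j) * D W i j - 1.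
Proof.
move=> eij oW; rewrite Xid ?hQ' ?gt_eqF ?D_gt0 //; ring.
Qed.

Lemma Dl t k i : e k i -> W t k i - V t k i <= lam ^+ t * (h k - V t k i * h i).
Proof.
elim: t k i => [|t IH] i j eij.
  by rewrite /mpaW /= subr0 expr0 mul1r mul0r subr0 h1.
rewrite W_step //= Phi_diff ?gt_eqF ?D_gt0 //; try apply: V_ok; try apply: W_ok.
set P := Phi _ i j; set d := S _ i j - S _ i j; set Dv := D (V t) i j.
set Xn := h i - Phi (V t) i j * h j.
have Dp : 0 < Dv by apply: D_gt0 => //; apply: V_ok.
have Dl1 : Dv <= 1 by apply: D_le1; apply: V_ok.
have P0 : 0 <= P by apply: ltW; apply: Phi_gt0 => //; apply: W_ok.
have P1 : P <= 1 by apply: Phi_le1 => //; apply: W_ok.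
have d0 : 0 <= d by rewrite subr_ge0; apply: S_mono; [apply: V_ok | apply: V_le_W].
have dL : d <= lam ^+ t * (Xn * Dv - 1).
  rewrite /d SdiffE /Xn -Xrec //; last by apply: V_ok.
  rewrite mulr_sumr; apply: ler_sum => k /andP[eik _].
  rewrite mulrCA ler_wpM2l //; apply: IH; by rewrite esym.
have X1 : 1 <= Xn by apply: (XV t.+1 eij).
have Xl : Xn - 1 <= lam * Xn.
  apply: lam_bound; first lra.
  apply: le_trans (h_le_hM i); apply: X_le => //; apply: V_ok (t.+1).
have L0 : 0 <= lam ^+ t by rewrite exprn_ge0 // lam_ge0.
rewrite ler_pdivrMr // exprS.
have : P * d <= d by rewrite -[X in _ <= X]mul1r ler_wpM2r.
have : Xn * Dv * (1 - lam) <= 1.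
  have : 0 <= Xn * (1 - lam) by rewrite mulr_ge0 //; [lra | have := lam_lt1; lra].
  nra.
nra.
Qed.


Lemma XW_lb t k i : e k i -> 1 - lam ^+ t * hM ^+ 2 <= h k - W t k i * h i.
Proof.
move=> eki.
have d := Dl t eki.
have x1 := XV t eki.
have xle : h k - V t k i * h i <= hM.
  apply: le_trans (h_le_hM k); apply: X_le => //; apply: V_ok.
have hi := h_le_hM i; have hi1 := h1 i.
have L0 : 0 <= lam ^+ t by rewrite exprn_ge0 // lam_ge0.
have : (W t k i - V t k i) * h i <= lam ^+ t * hM * hM.
  apply: le_trans (_ : lam ^+ t * (h k - V t k i * h i) * h i <= _).
    by rewrite ler_wpM2r //; lra.
  rewrite -mulrA -[X in _ <= X]mulrA ler_wpM2l //.
  by apply: le_trans (_ : hM * h i <= _); [rewrite ler_wpM2r //; lra | rewrite ler_wpM2l //; lra].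
rewrite expr2; nra.
Qed.

Lemma exists_T : exists T, forall k i, e k i -> 0 < h k - W T k i * h i.
Proof.
have nl : `|lam| < 1 by rewrite ger0_norm ?lam_ge0 ?lam_lt1.
have cv := cvg_expr nl.
have : (0 : R) < (hM ^+ 2)^-1 by rewrite invr_gt0 exprn_gt0 //; have := hM_ge1; lra.
move=> hp0; have [N _ HN] := cvgr_lt _ cv _ hp0.
exists N => k i eki; apply: lt_le_trans (XW_lb N eki).
have := HN N (leqnn N) => /=.
have hp : 0 < hM ^+ 2 by rewrite exprn_gt0 //; have := hM_ge1; lra.
rewrite -(ltr_pM2r hp) mulVf ?gt_eqF //; lra.
Qed.


Variable pi : I -> R.
Hypothesis pi_pos : forall i, 0 < pi i.
Hypothesis rev : forall i k, pi i * Q i k = pi k * Q k i.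

Definition Y (f : I -> R) t i j := pi i * D (W t) i j * (f i - W t.+1 i j * f j).

Lemma QWD t k i : e k i -> Q k i = W t.+1 k i * D (W t) k i.
Proof.
move=> eki; rewrite W_step // /Phi divfK // gt_eqF // D_gt0 //; apply: W_ok.
Qed.

Lemma Y_rec f t i j : e i j -> Y f t.+1 i j =
  pi i * (f i - \sum_k Q i k * f k) + \sum_(k | e i k && (k != j)) W t.+1 k i * Y f t k i.
Proof.
move=> eij; rewrite /Y (W_step t.+1 eij) -mulrA (mulrC (D _ i j)) Xid ?gt_eqF ?D_gt0 //;
  last by apply: W_ok.
rewrite mulrDr mulr_sumr; congr (_ + _); apply: eq_bigr => k /andP[eik _].
have eki : e k i by rewrite esym.
rewrite mulrA rev {1}(QWD t eki); ring.
Qed.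


Variable g : I -> R.
Hypothesis gQ : forall i, g i = (pi i)^-1 + \sum_k Q i k * g k.

Notation Hs t := (mpaH e Q q t).
Definition E t i j := Hs t.+1 i j - Y g t i j.

Lemma E_rec t i j : e i j -> E t.+1 i j = \sum_(k | e i k && (k != j)) W t.+1 k i * E t k i.
Proof.
move=> eij; rewrite /E H_step Y_rec //.
have -> : g i - \sum_k Q i k * g k = (pi i)^-1 by have := gQ i; set s := \sum_k _; lra.
rewrite mulfV ?gt_eqF //.
under [in RHS]eq_bigr do rewrite mulrBr.
rewrite sumrB; ring.
Qed.

Lemma Yh_rec t i j : e i j -> Y h t.+1 i j =
  pi i + \sum_(k | e i k && (k != j)) W t.+1 k i * Y h t k i.
Proof. by move=> eij; rewrite Y_rec // hQ' mulr1. Qed.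

Lemma Yh_le t i j : e i j -> Y h t i j <= pi i * hM.
Proof.
move=> eij; rewrite /Y -mulrA; apply: ler_wpM2l; first exact: ltW (pi_pos i).
have Xl : h i - W t.+1 i j * h j <= hM.
  apply: le_trans (h_le_hM i); apply: X_le => //; apply: W_ok.
have D0 : 0 < D (W t) i j by apply: D_gt0 => //; apply: W_ok.
have D1 : D (W t) i j <= 1 by apply: D_le1; apply: W_ok.
have := hM_ge1.
set X := h i - W t.+1 i j * h j in Xl *.
set d := D (W t) i j in D0 D1 *.
case: (lerP 0 X) => X0.
  have : d * X <= X by rewrite ler_piMl.
  lra.
have : d * X <= 0 by rewrite pmulr_rle0 // ltW.
lra.
Qed.

Lemma Y_contr t i j : e i j -> Y h t i j - pi i <= lam * Y h t i j.
Proof.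
move=> eij; have := Yh_le t eij; rewrite /lam mulrBl mul1r.
have hp : 0 < hM by have := hM_ge1; lra.
have := pi_pos i.
rewrite -ler_pdivrMr // => _ H.
rewrite mulrC; lra.
Qed.

Lemma single_le (F : I -> R) i : (forall j, 0 <= F j) -> F i <= \sum_j F j.
Proof.
move=> F0; rewrite (bigD1 i) //= lerDl; exact: sumr_ge0.
Qed.

Lemma E_bound T0 : (forall i j, e i j -> 0 < Y h T0 i j) ->
  exists K, forall n i j, e i j -> `|E (T0 + n) i j| <= K * lam ^+ n * Y h (T0 + n) i j.
Proof.
move=> Ypos.
pose F i j := if e i j then `|E T0 i j| / Y h T0 i j else 0.
have F0 : forall i j, 0 <= F i j.
  move=> i j; rewrite /F; case: ifP => // eij; rewrite divr_ge0 // ltW //; exact: Ypos.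
pose K := \sum_i \sum_j F i j.
have K0 : 0 <= K by apply: sumr_ge0 => i _; apply: sumr_ge0 => j _.
exists K; elim => [|n IH] i j eij.
  rewrite addn0 expr0 mulr1.
  have : F i j <= K.
    apply: le_trans (single_le i (fun i => sumr_ge0 _ (fun j _ => F0 i j))).
    exact: single_le.
  rewrite /F eij -(ler_pM2r (Ypos i j eij)) divfK // gt_eqF //; exact: Ypos.
rewrite addnS E_rec //.
apply: le_trans (ler_norm_sum _ _ _) _.
apply: le_trans (_ : \sum_(k | e i k && (k != j)) W (T0 + n).+1 k i *
   (K * lam ^+ n * Y h (T0 + n) k i) <= _).
  apply: ler_sum => k /andP[eik _]; have eki : e k i by rewrite esym.
  have w0 := ltW (W_gt0 (T0 + n).+1 eki).
  rewrite normrM (ger0_norm w0); apply: ler_wpM2l => //.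
  exact: IH.
have L0 : 0 <= K * lam ^+ n by rewrite mulr_ge0 // exprn_ge0 // lam_ge0.
under eq_bigr do rewrite mulrCA.
rewrite -mulr_sumr.
have := Yh_rec (T0 + n) eij; have := Y_contr (T0 + n).+1 eij.
set y := Y h _ i j; set s := \sum_(k | _) _ => H1 H2.
have -> : K * lam ^+ n.+1 * y = (K * lam ^+ n) * (lam * y) by rewrite exprS; ring.
apply: ler_wpM2l => //; lra.
Qed.


Lemma cvgB' (u v : nat -> R) : cvgn u -> cvgn v -> cvgn (fun t => u t - v t).
Proof. move=> hu hv; exact: is_cvgB hu hv. Qed.
Lemma cvgD' (u v : nat -> R) : cvgn u -> cvgn v -> cvgn (fun t => u t + v t).
Proof. move=> hu hv; exact: is_cvgD hu hv. Qed.
Lemma cvgM' (u v : nat -> R) : cvgn u -> cvgn v -> cvgn (fun t => u t * v t).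
Proof. move=> hu hv; exact: is_cvgM hu hv. Qed.

Lemma cvg_bigsum (P : pred I) (f : I -> nat -> R) :
  (forall k, P k -> cvgn (f k)) -> cvgn (fun t => \sum_(k | P k) f k t).
Proof.
move=> Hf.
suff : forall r, cvgn (fun t => \sum_(k <- r | P k) f k t) by apply.
elim => [|a r IH].
  have -> : (fun t => \sum_(k <- [::] | P k) f k t) = (fun _ => 0).
    by apply: funext => t; rewrite big_nil.
  exact: is_cvg_cst.
case Pa : (P a).
  have -> : (fun t => \sum_(k <- a :: r | P k) f k t) =
            (fun t => f a t + \sum_(k <- r | P k) f k t).
    by apply: funext => t; rewrite big_cons Pa.
  exact: cvgD' (Hf a Pa) IH.
have -> : (fun t => \sum_(k <- a :: r | P k) f k t) = (fun t => \sum_(k <- r | P k) f k t).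
  by apply: funext => t; rewrite big_cons Pa.
exact: IH.
Qed.

Lemma W_cvg k i : e k i -> cvgn (fun t => W t k i).
Proof.
move=> eki; apply: nonincreasing_is_cvgn.
  by apply/nonincreasing_seqP => n; apply: W_decr.
by exists 0 => _ [n _ <-]; apply: ltW; apply: W_gt0.
Qed.

Lemma shiftS_cvg (u : nat -> R) : cvgn u -> cvgn (fun t => u t.+1).
Proof.
move=> /cvg_ex [l Hl]; apply/cvg_ex; exists l.
by rewrite (cvg_shiftS u (nbhs l)).
Qed.

Lemma unshiftS_cvg (u : nat -> R) : cvgn (fun t => u t.+1) -> cvgn u.
Proof.
move=> /cvg_ex [l Hl]; apply/cvg_ex; exists l.
by rewrite -(cvg_shiftS u (nbhs l)).
Qed.

Lemma D_cvg i j : cvgn (fun t => D (W t) i j).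
Proof.
rewrite /D /S.
apply: (cvgB' (u := fun _ => 1) (v := fun t => \sum_(k | e i k && (k != j)) Q i k * W t k i)).
  exact: is_cvg_cst.
apply: cvg_bigsum => k /andP[eik _].
apply: (cvgM' (u := fun _ => Q i k) (v := fun t => W t k i)); first exact: is_cvg_cst.
by apply: W_cvg; rewrite esym.
Qed.

Lemma Y_cvg f i j : e i j -> cvgn (fun t => Y f t i j).
Proof.
move=> eij; rewrite /Y.
apply: (cvgM' (u := fun t => pi i * D (W t) i j) (v := fun t => f i - W t.+1 i j * f j)).
  apply: (cvgM' (u := fun _ => pi i) (v := fun t => D (W t) i j)); first exact: is_cvg_cst.
  exact: D_cvg.
apply: (cvgB' (u := fun _ => f i) (v := fun t => W t.+1 i j * f j)); first exact: is_cvg_cst.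
apply: (cvgM' (u := fun t => W t.+1 i j) (v := fun _ => f j)); last exact: is_cvg_cst.
exact: shiftS_cvg (W_cvg eij).
Qed.

Lemma E_cvg0 i j : e i j -> (fun t => E t i j) @ \oo --> 0.
Proof.
move=> eij.
have [T Tpos] := exists_T.
have Ypos : forall i j, e i j -> 0 < Y h T i j.
  move=> a b eab; rewrite /Y mulr_gt0 // ?mulr_gt0 //; first by apply: D_gt0 => //; apply: W_ok.
  apply: lt_le_trans (Tpos a b eab) _.
  rewrite lerB // ler_wpM2r ?W_decr //; exact: le_trans (h1 b).
have [K HK] := E_bound Ypos.
rewrite -(cvg_shiftn T).
have K0 : 0 <= K.
  have := HK 0%N i j eij; rewrite addn0 expr0 mulr1 => H.
  have yp := Ypos i j eij; have := normr_ge0 (E T i j).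
  move: H yp; set y := Y h _ i j; set z := `|_|; nra.
set c := K * (pi i * hM).
apply: (@squeeze_cvgr _ _ _ _ (fun n => - (c * lam ^+ n)) (fun n => c * lam ^+ n)).
- apply: nearW => n /=; rewrite -ler_norml addnC.
  apply: le_trans (HK n i j eij) _.
  have Hy := Yh_le (T + n) eij.
  have L : 0 <= K * lam ^+ n by rewrite mulr_ge0 // exprn_ge0 // lam_ge0.
  have -> : c * lam ^+ n = (K * lam ^+ n) * (pi i * hM) by rewrite /c; ring.
  by apply: ler_wpM2l.
- rewrite -oppr0; apply: cvgN; rewrite -(mulr0 c); apply: cvgMl_tmp; apply: cvg_expr.
  by rewrite ger0_norm ?lam_ge0 ?lam_lt1.
- rewrite -(mulr0 c); apply: cvgMl_tmp; apply: cvg_expr.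
  by rewrite ger0_norm ?lam_ge0 ?lam_lt1.
Qed.

Lemma H_cvg i j : e i j -> cvgn (fun t => Hs t i j).
Proof.
move=> eij; apply: unshiftS_cvg.
have -> : (fun t => Hs t.+1 i j) = (fun t => Y g t i j + E t i j).
  by apply: funext => t; rewrite /E; ring.
apply: (cvgD' (u := fun t => Y g t i j) (v := fun t => E t i j)); first exact: Y_cvg.
exact: cvgP (E_cvg0 eij).
Qed.

Lemma Hnode_cvg l : cvgn (fun t => mpaHnode e Q q t l).
Proof.
rewrite /mpaHnode.
apply: (cvgD' (u := fun _ => 1) (v := fun t => \sum_(i | e l i) W t i l * Hs t i l)).
  exact: is_cvg_cst.
apply: cvg_bigsum => i eli; have eil : e i l by rewrite esym.
apply: (cvgM' (u := fun t => W t i l) (v := fun t => Hs t i l)).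
  exact: W_cvg.
exact: H_cvg.
Qed.

End Main.

Unset Implicit Arguments.

Theorem theorem1 (R : realType) (I : finType) (e : rel I)
  (Q : I -> I -> R) (q : I -> R) :
  simple_graph e -> connected_graph e ->
  (forall i j, 0 <= Q i j) -> (forall i, 0 <= q i) ->
  (forall i j, Q i j = 0 <-> ~~ e i j) ->
  (forall i, \sum_(j : I) Q i j + q i = 1) ->
  (* (i) *)
  (exists i, q i != 0) ->
  (forall l : I, strictly_substochastic_on Q (~: [set l])) ->
  (* (ii) ; the extra node f is None in option I *)
  (exists C : option I -> option I -> R,
     (forall a b, 0 <= C a b) /\ (forall a b, C a b = C b a) /\
     (forall i j, Q i j = C (Some i) (Some j) / \sum_(k : option I) C (Some i) k) /\
     (forall i, q i = C (Some i) None / \sum_(k : option I) C (Some i) k)) ->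
  (forall i j, e i j ->
     cvg ((fun t => mpaW e Q q t i j) @ \oo) /\
     cvg ((fun t => mpaH e Q q t i j) @ \oo)) /\
  (forall l : I, cvg ((fun t => mpaHnode e Q q t l) @ \oo)).
Proof.
move=> [eirr esym] conn Q0 q0 Qe rows [m0 qm0] _ [C [C0 [Csym [QC qC]]]].
pose pi i := \sum_(k : option I) C (Some i) k.
have pi_pos : forall i, 0 < pi i.
  move=> i; rewrite lt_def sumr_ge0 ?andbT //; apply/eqP => p0.
  have := rows i; rewrite qC -/(pi i) p0 invr0 mulr0 addr0 big1 => [|j _].
    by move/eqP; rewrite eq_sym oner_eq0.
  by rewrite QC -/(pi i) p0 invr0 mulr0.
have rev : forall i k, pi i * Q i k = pi k * Q k i.
  move=> i k; rewrite !QC -/(pi i) -/(pi k) !mulrA !(mulrC (pi _)) -!mulrA.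
  by rewrite !mulfV ?gt_eqF // !mulr1 Csym.
have [h hQ] := solve esym conn Q0 q0 Qe rows qm0 (fun _ => 1).
have [g gQ] := solve esym conn Q0 q0 Qe rows qm0 (fun i => (pi i)^-1).
split.
  move=> i j eij; split.
    exact: (W_cvg esym Q0 q0 Qe rows eij).
  exact: (H_cvg esym Q0 q0 Qe rows m0 hQ pi_pos rev gQ eij).
move=> l; exact: (Hnode_cvg esym Q0 q0 Qe rows m0 hQ pi_pos rev gQ).
Qed.
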